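(* For every integer $n\ge 0$, the nanostar dendrimer $D_3[n]$ satisfies $$SO(D_3[n])=(63\cdot 2^n-30)\sqrt{2}+(18\cdot 2^n-12)\sqrt{13}.$$
   Context: For a finite simple graph $G$, $SO(G)=\sum_{uv\in E(G)}\sqrt{d_u^2+d_v^2}$, where $d_u$ is the degree of $u$ in $G$ (the Sombor index). Define rooted graphs $B_m$ recursively: $B_0$ is a hexagon $C_6$ with a distinguished root vertex; for $m\ge 1$, $B_m$ is obtained from a hexagon with vertices $a_1,\ldots,a_6$ in cyclic order, a new vertex $b$ joined by an edge to $a_4$, and two disjoint copies of $B_{m-1}$ whose roots are each joined by an edge to $b$; the root of $B_m$ is $a_1$. The dendrimer $D_3[n]$ is obtained from three disjoint copies of $B_n$ and a new central vertex $c$ joined by an edge to the root of each copy. *)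

(* Defs.v *)
From Stdlib Require Import Reals List Arith.
Import ListNotations.
Open Scope R_scope.

(* A finite (rooted) graph with vertex set {0, ..., nv-1}, given by its list of
   edges (each unordered edge listed exactly once), and a root vertex. *)
Record rgraph := RGraph { nv : nat; edges : list (nat * nat); root : nat }.

Definition shift_edge (k : nat) (e : nat * nat) : nat * nat :=
  ((k + fst e)%nat, (k + snd e)%nat).

(* degree of v = number of edges incident to v (graphs are loopless) *)
Definition deg (E : list (nat * nat)) (v : nat) : nat :=
  length (filter (fun e => orb (Nat.eqb (fst e) v) (Nat.eqb (snd e) v)) E).

Definition SO (G : rgraph) : R :=
  fold_right Rplus 0
    (map (fun e => sqrt (INR (deg (edges G) (fst e)) ^ 2
                         + INR (deg (edges G) (snd e)) ^ 2)) (edges G)).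

Definition hexagon_edges : list (nat * nat) :=
  [(0,1); (1,2); (2,3); (3,4); (4,5); (5,0)]%nat.

(* B_0 : hexagon rooted at 0.
   B_(m+1): hexagon a1..a6 = 0..5, b = 6, edge a4 b = (3,6), two disjoint copies
   of B_m on labels 7.. and 7+|B_m|.., their roots joined to b; root a1 = 0. *)
Fixpoint B (m : nat) : rgraph :=
  match m with
  | O => RGraph 6 hexagon_edges 0
  | S m' =>
      let G := B m' in
      let s1 := 7%nat in
      let s2 := (7 + nv G)%nat in
      RGraph (7 + 2 * nv G)%nat
        (hexagon_edges ++ [(3,6)%nat; (6, s1 + root G)%nat; (6, s2 + root G)%nat]
          ++ map (shift_edge s1) (edges G) ++ map (shift_edge s2) (edges G))
        0
  end.

Definition D3 (n : nat) : rgraph :=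
  let G := B n in
  let N := nv G in
  RGraph (3 * N + 1)%nat
    ([(3 * N, root G); (3 * N, N + root G); (3 * N, 2 * N + root G)]%nat
      ++ edges G ++ map (shift_edge N) (edges G) ++ map (shift_edge (2 * N)) (edges G))
    (3 * N)%nat.

(* Main.v *)
Require Import Defs.
From Stdlib Require Import Reals List Arith Lia Lra.
Import ListNotations.
Open Scope R_scope.

Definition Sd (d : nat -> nat) (E : list (nat * nat)) : R :=
  fold_right Rplus 0
    (map (fun e => sqrt (INR (d (fst e)) ^ 2 + INR (d (snd e)) ^ 2)) E).

Lemma SO_Sd G : SO G = Sd (deg (edges G)) (edges G).
Proof. reflexivity. Qed.

Lemma Sd_app d E1 E2 : Sd d (E1 ++ E2) = Sd d E1 + Sd d E2.
Proof. unfold Sd; induction E1; cbn [map fold_right app]; [ring| rewrite IHE1; ring]. Qed.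

Lemma Sd_shift d k E : Sd d (map (shift_edge k) E) = Sd (fun v => d (k + v)%nat) E.
Proof. unfold Sd; induction E; cbn [map fold_right app]; [reflexivity| rewrite IHE; reflexivity]. Qed.

Lemma Sd_ext d1 d2 E :
  (forall e, In e E -> d1 (fst e) = d2 (fst e) /\ d1 (snd e) = d2 (snd e)) ->
  Sd d1 E = Sd d2 E.
Proof.
  unfold Sd; induction E as [|a E IH]; cbn [map fold_right app]; intros H; [reflexivity|].
  destruct (H a (or_introl eq_refl)) as [H1 H2]. rewrite H1, H2, IH; [reflexivity|intros e He; apply H; now right].
Qed.

Definition bounded (N : nat) (E : list (nat * nat)) :=
  forall e, In e E -> (fst e < N /\ snd e < N)%nat.

Lemma deg_app E1 E2 v : deg (E1 ++ E2) v = (deg E1 v + deg E2 v)%nat.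
Proof. unfold deg. rewrite filter_app, length_app. reflexivity. Qed.

Lemma deg_shift k E v : deg (map (shift_edge k) E) (k + v) = deg E v.
Proof.
  unfold deg; induction E as [|a E IH]; simpl; [reflexivity|].
  destruct a as [x y]; simpl.
  destruct (Nat.eqb_spec (k+x) (k+v)), (Nat.eqb_spec x v), (Nat.eqb_spec (k+y) (k+v)), (Nat.eqb_spec y v);
  simpl; try lia; rewrite IH; reflexivity.
Qed.

Lemma deg_out N E v : bounded N E -> (N <= v)%nat -> deg E v = 0%nat.
Proof.
  unfold deg, bounded; induction E as [|a E IH]; simpl; intros Hb Hv; [reflexivity|].
  destruct (Hb a (or_introl eq_refl)) as [H1 H2].
  destruct (Nat.eqb_spec (fst a) v), (Nat.eqb_spec (snd a) v); simpl; try lia.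
  apply IH; auto.
Qed.

Lemma deg_shift_out N k E v : bounded N E -> (v < k \/ k + N <= v)%nat ->
  deg (map (shift_edge k) E) v = 0%nat.
Proof.
  unfold deg, bounded; induction E as [|a E IH]; simpl; intros Hb Hv; [reflexivity|].
  destruct (Hb a (or_introl eq_refl)) as [H1 H2].
  destruct (Nat.eqb_spec (k + fst a) v), (Nat.eqb_spec (k + snd a) v); simpl; try lia.
  apply IH; auto.
Qed.

Lemma root_B m : root (B m) = 0%nat.
Proof. destruct m; reflexivity. Qed.

Lemma nv_B m : (6 <= nv (B m))%nat.
Proof. destruct m; simpl; lia. Qed.

Lemma bounded_B m : bounded (nv (B m)) (edges (B m)).
Proof.
  induction m as [|m IH]; unfold bounded in *.
  - simpl; intros e He; repeat destruct He as [He|He]; subst; simpl; lia.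
  - pose proof (nv_B m). cbn [B edges nv]. rewrite root_B. intros e He.
    repeat rewrite in_app_iff in He.
    destruct He as [He|[He|[He|He]]].
    + simpl in He; repeat destruct He as [He|He]; subst; simpl; lia.
    + simpl in He; repeat destruct He as [He|He]; subst; simpl; lia.
    + apply in_map_iff in He as [x [<- Hx]]; apply IH in Hx; unfold shift_edge; simpl; destruct Hx; lia.
    + apply in_map_iff in He as [x [<- Hx]]; apply IH in Hx; unfold shift_edge; simpl; destruct Hx; lia.
Qed.

Ltac degc := cbv [deg filter length fst snd orb hexagon_edges];
  repeat (match goal with |- context [Nat.eqb ?a ?b] => destruct (Nat.eqb_spec a b); try (exfalso; lia) end);
  cbn [orb length]; try lia.

Definition dB m v := (deg (edges (B m)) v + if Nat.eqb v 0 then 1 else 0)%nat.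

Lemma deg_B_root m : deg (edges (B m)) 0 = 2%nat.
Proof.
  destruct m as [|m]; [reflexivity|].
  pose proof (nv_B m). pose proof (bounded_B m).
  cbn [B edges]. rewrite root_B, !deg_app.
  rewrite (deg_shift_out (nv (B m)) 7 _ 0), (deg_shift_out (nv (B m)) (7 + nv (B m)) _ 0) by (auto; lia).
  degc.
Qed.

Lemma dB_copy1 m v : (v < nv (B m))%nat -> dB (S m) (7 + v) = dB m v.
Proof.
  intros Hv. pose proof (nv_B m). pose proof (bounded_B m).
  unfold dB. cbn [B edges]. rewrite root_B, !deg_app, deg_shift.
  rewrite (deg_shift_out (nv (B m)) (7 + nv (B m)) _ (7 + v)) by (auto; lia).
  destruct (Nat.eqb_spec v 0).
  - subst. rewrite deg_B_root. degc.
  - remember (deg (edges (B m)) v) as D. degc.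
Qed.

Lemma dB_copy2 m v : (v < nv (B m))%nat -> dB (S m) (7 + nv (B m) + v) = dB m v.
Proof.
  intros Hv. pose proof (nv_B m). pose proof (bounded_B m).
  unfold dB. cbn [B edges]. rewrite root_B, !deg_app, deg_shift.
  rewrite (deg_shift_out (nv (B m)) 7 _ (7 + nv (B m) + v)) by (auto; lia).
  destruct (Nat.eqb_spec v 0).
  - subst. rewrite deg_B_root. degc.
  - remember (deg (edges (B m)) v) as D. degc.
Qed.

Lemma dB_small m v : (v <= 6)%nat ->
  dB (S m) v = match v with 0 => 3 | 3 => 3 | 6 => 3 | _ => 2 end%nat.
Proof.
  intros Hv. pose proof (nv_B m). pose proof (bounded_B m).
  unfold dB. cbn [B edges]. rewrite root_B, !deg_app.
  rewrite (deg_shift_out (nv (B m)) 7 _ v), (deg_shift_out (nv (B m)) (7 + nv (B m)) _ v) by (auto; lia).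
  do 7 (destruct v as [|v]; [degc|]). lia.
Qed.

Lemma dB_root m : dB m 0 = 3%nat.
Proof. unfold dB. rewrite deg_B_root. reflexivity. Qed.

Definition T m := Sd (dB m) (edges (B m)).
Definition q a b := sqrt (INR a ^ 2 + INR b ^ 2).

Lemma T_S m : T (S m) = 4 * q 3 2 + 2 * q 2 2 + 3 * q 3 3 + 2 * T m.
Proof.
  pose proof (nv_B m). pose proof (bounded_B m) as Hb.
  unfold T at 1. cbn [B edges]. rewrite root_B, !Sd_app, !Sd_shift.
  rewrite (Sd_ext (fun v => dB (S m) (7 + v)) (dB m)).
  2:{ intros e He; destruct (Hb e He); split; apply dB_copy1; auto. }
  rewrite (Sd_ext (fun v => dB (S m) (7 + nv (B m) + v)) (dB m)).
  2:{ intros e He; destruct (Hb e He); split; apply dB_copy2; auto. }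
  fold (T m).
  replace (7 + 0)%nat with (7 + 0)%nat by reflexivity.
  unfold Sd; cbn [map fold_right fst snd hexagon_edges].
  rewrite !dB_small by lia.
  rewrite dB_copy1, dB_copy2, !dB_root by lia. unfold q.
  replace (INR 2 ^ 2 + INR 3 ^ 2) with (INR 3 ^ 2 + INR 2 ^ 2) by ring. ring.
Qed.

Lemma T_0 : T 0 = 2 * q 3 2 + 4 * q 2 2.
Proof.
  unfold T, Sd, dB. cbn [B edges hexagon_edges map fold_right fst snd].
  cbv [deg filter length fst snd orb hexagon_edges Nat.eqb]. cbn [Nat.add]. unfold q.
  replace (INR 2 ^ 2 + INR 3 ^ 2) with (INR 3 ^ 2 + INR 2 ^ 2) by ring. ring.
Qed.

Lemma D3_copy0 n v : (v < nv (B n))%nat -> deg (edges (D3 n)) v = dB n v.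
Proof.
  intros Hv. pose proof (nv_B n). pose proof (bounded_B n).
  unfold D3, dB. cbn [edges]. rewrite root_B, !deg_app.
  rewrite (deg_shift_out (nv (B n)) (nv (B n)) _ v), (deg_shift_out (nv (B n)) (2 * nv (B n)) _ v) by (auto; lia).
  remember (deg (edges (B n)) v) as D. degc.
Qed.

Lemma D3_copy1 n v : (v < nv (B n))%nat -> deg (edges (D3 n)) (nv (B n) + v) = dB n v.
Proof.
  intros Hv. pose proof (nv_B n). pose proof (bounded_B n).
  unfold D3, dB. cbn [edges]. rewrite root_B, !deg_app, deg_shift.
  rewrite (deg_out (nv (B n)) (edges (B n)) (nv (B n) + v)) by (auto; lia).
  rewrite (deg_shift_out (nv (B n)) (2 * nv (B n)) _ (nv (B n) + v)). 2: auto. 2: lia.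
  remember (deg (edges (B n)) v) as D. degc.
Qed.

Lemma D3_copy2 n v : (v < nv (B n))%nat -> deg (edges (D3 n)) (2 * nv (B n) + v) = dB n v.
Proof.
  intros Hv. pose proof (nv_B n). pose proof (bounded_B n).
  unfold D3, dB. cbn [edges]. rewrite root_B, !deg_app, deg_shift.
  rewrite (deg_out (nv (B n)) (edges (B n)) (2 * nv (B n) + v)), (deg_shift_out (nv (B n)) (nv (B n)) _ (2 * nv (B n) + v)) by (auto; lia).
  remember (deg (edges (B n)) v) as D. degc.
Qed.

Lemma D3_center n : deg (edges (D3 n)) (3 * nv (B n)) = 3%nat.
Proof.
  pose proof (nv_B n). pose proof (bounded_B n).
  unfold D3. cbn [edges]. rewrite root_B, !deg_app.
  rewrite (deg_out (nv (B n)) (edges (B n)) (3 * nv (B n))), (deg_shift_out (nv (B n)) (2 * nv (B n)) _ (3 * nv (B n))),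
    (deg_shift_out (nv (B n)) (nv (B n)) _ (3 * nv (B n))) by (auto; lia).
  degc.
Qed.

Lemma SO_D3 n : SO (D3 n) = 3 * q 3 3 + 3 * T n.
Proof.
  pose proof (nv_B n). pose proof (bounded_B n) as Hb.
  rewrite SO_Sd. remember (edges (D3 n)) as E eqn:HE.
  pose proof HE as HE'. unfold D3 in HE'. cbn [edges] in HE'. rewrite root_B in HE'.
  rewrite HE' at 2. rewrite !Sd_app, !Sd_shift.
  rewrite (Sd_ext (deg E) (dB n) (edges (B n))).
  2:{ intros e He; destruct (Hb e He); subst E; split; apply D3_copy0; auto. }
  rewrite (Sd_ext (fun v => deg E (nv (B n) + v)) (dB n)).
  2:{ intros e He; destruct (Hb e He); subst E; split; apply D3_copy1; auto. }
  rewrite (Sd_ext (fun v => deg E (2 * nv (B n) + v)) (dB n)).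
  2:{ intros e He; destruct (Hb e He); subst E; split; apply D3_copy2; auto. }
  fold (T n). unfold Sd at 1. cbn [map fold_right fst snd]. subst E.
  rewrite D3_center.
  rewrite D3_copy0, D3_copy1, D3_copy2, dB_root by lia.
  unfold q. ring.
Qed.

Lemma q32 : q 3 2 = sqrt 13.
Proof. unfold q. f_equal. simpl. ring. Qed.
Lemma q22 : q 2 2 = 2 * sqrt 2.
Proof.
  unfold q. replace (INR 2 ^ 2 + INR 2 ^ 2) with (2 * 2 * 2) by (simpl; ring).
  rewrite sqrt_mult, sqrt_square; lra.
Qed.
Lemma q33 : q 3 3 = 3 * sqrt 2.
Proof.
  unfold q. replace (INR 3 ^ 2 + INR 3 ^ 2) with (3 * 3 * 2) by (simpl; ring).
  rewrite sqrt_mult, sqrt_square; lra.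
Qed.

Lemma T_formula m : T m = (21 * 2 ^ m - 13) * sqrt 2 + (6 * 2 ^ m - 4) * sqrt 13.
Proof.
  induction m as [|m IH].
  - rewrite T_0, q32, q22. simpl. ring.
  - rewrite T_S, IH, q32, q22, q33. simpl. ring.
Qed.


Theorem mainTheorem12 (n : nat) :
  SO (D3 n) = (63 * 2 ^ n - 30) * sqrt 2 + (18 * 2 ^ n - 12) * sqrt 13.
Proof.
  rewrite SO_D3, T_formula, q33. ring.
Qed.
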